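(* Let $(Y,\overline X,x)$ be a point for (BM$_{\mathbf n}$). Suppose either (i) it is 1-critical with a multiplier $\lambda$ (as in the definition of 1-criticality) satisfying $S_j(\lambda)\in\mathbb{S}^{n_j}_+$ for all $j\in[k]$, or (ii) it is 2-critical and $Y_j$ is column rank deficient (i.e. $\operatorname{rank}Y_j<p_j$) for every $j\in[k]$. Then $(Y,\overline X,x)$ is a global minimizer of (BM$_{\mathbf n}$).
   Context: Let $\mathbb{S}^{r}$ denote real symmetric $r\times r$ matrices, $\mathbb{S}^r_+$ the PSD cone, $A\bullet B=\operatorname{trace}(A^TB)$. Let $\mathbf n=(n_1,\dots,n_\ell)$, $d\ge 0$, $1\le k\le \ell$, $\mathbb{S}^{\mathbf n}=\mathbb{S}^{n_1}\times\cdots\times\mathbb{S}^{n_\ell}$, $\mathbb{S}^{\mathbf n}_+=\mathbb{S}^{n_1}_+\times\cdots\times\mathbb{S}^{n_\ell}_+$, with the inner product $\langle\cdot,\cdot\rangle$ on $\mathbb{S}^{\mathbf n}\times\mathbb{R}^d$ being the sum of trace inner products and the dot product. Let $C\in\mathbb{S}^{\mathbf n}\times\mathbb{R}^d$, $b\in\mathbb{R}^m$, and $\mathcal{A}:\mathbb{S}^{\mathbf n}\times\mathbb{R}^d\to\mathbb{R}^m$ linear, written $\mathcal{A}(X_1,\dots,X_\ell,x)=\sum_j\mathcal{A}_j(X_j)+\mathcal{A}_0(x)$ with $\mathcal{A}_j(X_j)=(A_{i,j}\bullet X_j)_{i\in[m]}$, $A_{i,j}\in\mathbb{S}^{n_j}$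 (this formula also defines $\mathcal{A}_j$ on nonsymmetric matrices); $\mathcal{A}^*$ is its adjoint. Let $\mathscr{X}=\{X=(X_1,\dots,X_\ell,x)\in\mathbb{S}^{\mathbf n}_+\times\mathbb{R}^d:\mathcal{A}(X)=b\}$, assumed nonempty, with $\min_{X\in\mathscr{X}}\langle C,X\rangle$ attained. For positive integers $p_1,\dots,p_k$, let $Y=(Y_1,\dots,Y_k)$, $Y_j\in\mathbb{R}^{n_j\times p_j}$, $q(Y)=(Y_1Y_1^T,\dots,Y_kY_k^T)$, $\overline X=(X_{k+1},\dots,X_\ell)$. Problem (BM$_{\mathbf n}$) is $\min_{Y,\overline X,x}\langle C,(q(Y),\overline X,x)\rangle$ subject to $(q(Y),\overline X,x)\in\mathscr{X}$. For $\lambda\in\mathbb{R}^m$ let $S(\lambda)=C-\mathcal{A}^*(\lambda)$ with components $S_j(\lambda)\in\mathbb{S}^{n_j}$ and $s(\lambda)\in\mathbb{R}^d$. A point $(Y,\overline X,x)$ is 1-critical with multiplier $\lambda\in\mathbb{R}^m$ if $(q(Y),\overline X,x)\in\mathscr{X}$, $S_j(\lambda)\in\mathbb{S}^{n_j}_+$ for $j>k$, $\sum_{j>k}S_j(\lambda)\bullet X_j=0$, $s(\lambda)=0$, and $S_j(\lambda)Y_j=0$ for $j\in[k]$; it is 2-critical if moreover, for each $j\in[k]$, $S_j(\lambda)\bullet U_jU_j^T\ge0$ for all $U_j\in\mathbb{R}^{n_j\times p_j}$ with $\mathcal{A}_j(U_jY_j^T)=0$. *)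

(* Defs.v *)
From mathcomp Require Import all_boot all_order all_algebra.
Set Implicit Arguments. Unset Strict Implicit. Unset Printing Implicit Defensive.
Import Order.TTheory GRing.Theory Num.Theory.
Local Open Scope ring_scope.

Definition frob (R : rcfType) (r s : nat) (M N : 'M[R]_(r, s)) : R :=
  \tr (M^T *m N).

Definition psd (R : rcfType) (r : nat) (M : 'M[R]_r) : Prop :=
  M^T = M /\ forall v : 'cV[R]_r, 0 <= (v^T *m M *m v) 0 0.

Definition dotv (R : rcfType) (d : nat) (u v : 'rV[R]_d) : R :=
  \sum_(t < d) u 0 t * v 0 t.

Section BM.
Variables (R : rcfType) (l : nat) (n : 'I_l -> nat) (d m k : nat)
  (p : 'I_l -> nat).
(* A_{i,j} blocks, A_0 given by rows a0 i, cost (C_j)_j and c, rhs b *)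
Variables (A : 'I_m -> forall j : 'I_l, 'M[R]_(n j)) (a0 : 'I_m -> 'rV[R]_d)
  (C : forall j : 'I_l, 'M[R]_(n j)) (c : 'rV[R]_d) (b : 'I_m -> R).

Definition opA (X : forall j : 'I_l, 'M[R]_(n j)) (x : 'rV[R]_d) : 'I_m -> R :=
  fun i => \sum_(j < l) frob (A i j) (X j) + dotv (a0 i) x.

Definition obj (X : forall j : 'I_l, 'M[R]_(n j)) (x : 'rV[R]_d) : R :=
  \sum_(j < l) frob (C j) (X j) + dotv c x.

Definition feas (X : forall j : 'I_l, 'M[R]_(n j)) (x : 'rV[R]_d) : Prop :=
  (forall j, psd (X j)) /\ forall i, opA X x i = b i.

(* (q(Y), Xbar): blocks j < k (0-indexed, i.e. j in [k]) are Y_j Y_j^T,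
   the others come from Xbar (the entries Xb j for j < k are ignored). *)
Definition qfull (Y : forall j : 'I_l, 'M[R]_(n j, p j))
  (Xb : forall j : 'I_l, 'M[R]_(n j)) : forall j : 'I_l, 'M[R]_(n j) :=
  fun j => if (j < k)%N then Y j *m (Y j)^T else Xb j.

Definition Slam (lam : 'I_m -> R) (j : 'I_l) : 'M[R]_(n j) :=
  C j - \sum_(i < m) lam i *: A i j.
Definition slam (lam : 'I_m -> R) : 'rV[R]_d :=
  c - \sum_(i < m) lam i *: a0 i.

(* A_j applied to a (possibly nonsymmetric) matrix *)
Definition Aj (j : 'I_l) (M : 'M[R]_(n j)) : 'I_m -> R :=
  fun i => frob (A i j) M.

Definition crit1 (Y : forall j : 'I_l, 'M[R]_(n j, p j))
  (Xb : forall j : 'I_l, 'M[R]_(n j)) (x : 'rV[R]_d) (lam : 'I_m -> R) : Prop :=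
  [/\ feas (qfull Y Xb) x,
      (forall j : 'I_l, (k <= j)%N -> psd (Slam lam j)),
      \sum_(j < l | (k <= j)%N) frob (Slam lam j) (Xb j) = 0,
      slam lam = 0 &
      (forall j : 'I_l, (j < k)%N -> Slam lam j *m Y j = 0)].

Definition crit2 (Y : forall j : 'I_l, 'M[R]_(n j, p j))
  (Xb : forall j : 'I_l, 'M[R]_(n j)) (x : 'rV[R]_d) (lam : 'I_m -> R) : Prop :=
  crit1 Y Xb x lam /\
  forall j : 'I_l, (j < k)%N -> forall U : 'M[R]_(n j, p j),
    (forall i, Aj (U *m (Y j)^T) i = 0) ->
    0 <= frob (Slam lam j) (U *m U^T).

Definition bm_global_min (Y : forall j : 'I_l, 'M[R]_(n j, p j))
  (Xb : forall j : 'I_l, 'M[R]_(n j)) (x : 'rV[R]_d) : Prop :=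
  feas (qfull Y Xb) x /\
  forall (Y' : forall j : 'I_l, 'M[R]_(n j, p j))
         (Xb' : forall j : 'I_l, 'M[R]_(n j)) (x' : 'rV[R]_d),
    feas (qfull Y' Xb') x' -> obj (qfull Y Xb) x <= obj (qfull Y' Xb') x'.

End BM.

(* Main.v *)
Require Import Defs.
From mathcomp Require Import all_boot all_order all_algebra ring lra.
Import Order.TTheory GRing.Theory Num.Theory.
Local Open Scope ring_scope.

Section PSD.
Variable R : rcfType.

Lemma e00D (A B : 'M[R]_(1, 1)) : (A + B) 0 0 = A 0 0 + B 0 0.
Proof. by rewrite mxE. Qed.
Lemma e00B (A B : 'M[R]_(1, 1)) : (A - B) 0 0 = A 0 0 - B 0 0.
Proof. by rewrite !mxE. Qed.
Lemma e00Z (a : R) (A : 'M[R]_(1, 1)) : (a *: A) 0 0 = a * A 0 0.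
Proof. by rewrite mxE. Qed.
Lemma e00M (A B : 'M[R]_(1, 1)) : (A *m B) 0 0 = A 0 0 * B 0 0.
Proof. by rewrite mxE big_ord1. Qed.
Lemma e00T (A : 'M[R]_(1, 1)) : A^T 0 0 = A 0 0.
Proof. by rewrite mxE. Qed.
Lemma tr11 (A : 'M[R]_(1, 1)) : \tr A = A 0 0.
Proof. by rewrite /mxtrace big_ord1. Qed.

Variable n : nat.
Definition qf (X : 'M[R]_n) (u v : 'cV[R]_n) := (u^T *m X *m v) 0 0.

Lemma qf_sym X u v : X^T = X -> qf X u v = qf X v u.
Proof.
move=> sX; rewrite /qf -e00T !trmx_mul trmxK sX mulmxA //.
Qed.

Lemma qf_expand X u w t : X^T = X ->
  qf X (u + t *: w) (u + t *: w) = qf X u u + 2 * t * qf X u w + t ^+ 2 * qf X w w.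
Proof.
move=> sX; have swu := qf_sym X w u sX.
rewrite /qf.
rewrite [(u + t *: w)^T]linearD /= [(t *: w)^T]linearZ /=.
rewrite !(mulmxDl, mulmxDr) -!(scalemxAl, scalemxAr) !e00D !e00Z.
move: swu; rewrite /qf => ->.
rewrite expr2; ring.
Qed.

Lemma qf_delta X a b : qf X (delta_mx a 0) (delta_mx b 0) = X a b.
Proof. by rewrite /qf trmx_delta -rowE -colE !mxE. Qed.

Lemma psd_qf X v : psd X -> 0 <= qf X v v.
Proof. by case=> _ /(_ v). Qed.

Lemma psd_null X e v : psd X -> qf X e e = 0 -> qf X v e = 0.
Proof.
move=> pX h0; apply/eqP; apply/negP => /negP hb.
set bb := qf X v e.
have := psd_qf X (v + (- (qf X v v + 1) / (2 * bb)) *: e) pX.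
rewrite qf_expand; last by case: pX.
rewrite h0 mulr0 addr0 -/bb.
have -> : 2 * (- (qf X v v + 1) / (2 * bb)) * bb = - (qf X v v + 1).
  by field.
lra.
Qed.

Lemma psd_schur X e v : psd X -> 0 < qf X e e ->
  qf X v e ^+ 2 / qf X e e <= qf X v v.
Proof.
move=> pX hq.
have := psd_qf X (v + (- qf X v e / qf X e e) *: e) pX.
rewrite qf_expand; last by case: pX.
have hq0 : qf X e e != 0 by rewrite gt_eqF.
have -> : qf X v v + 2 * (- qf X v e / qf X e e) * qf X v e +
    (- qf X v e / qf X e e) ^+ 2 * qf X e e = qf X v v - qf X v e ^+ 2 / qf X e e.
  by field.
by rewrite subr_ge0.
Qed.

Definition redX (X : 'M[R]_n) (i : 'I_n) :=
  X - (X i i)^-1 *: ((X *m delta_mx i (0 : 'I_1)) *m (X *m delta_mx i (0 : 'I_1))^T).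

Lemma qf_redX X i v : X^T = X ->
  qf (redX X i) v v = qf X v v - (X i i)^-1 * qf X v (delta_mx i 0) ^+ 2.
Proof.
move=> sX; rewrite /qf /redX mulmxBr mulmxBl e00B -scalemxAr -scalemxAl e00Z.
congr (_ - _ * _).
rewrite !mulmxA -(mulmxA (v^T *m X *m delta_mx i 0)) e00M.
have -> : (X *m delta_mx i (0 : 'I_1))^T *m v = (v^T *m X *m delta_mx i 0)^T.
  by rewrite !trmx_mul trmxK sX mulmxA.
by rewrite e00T expr2.
Qed.

Lemma redX_sym X i : X^T = X -> (redX X i)^T = redX X i.
Proof.
move=> sX; rewrite /redX linearB /= linearZ /= trmx_mul trmxK sX //.
Qed.

Lemma redX_psd X i : psd X -> 0 < X i i -> psd (redX X i).
Proof.
move=> pX hpos; have sX : X^T = X by case: pX.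
split; first exact: redX_sym.
move=> v; change (0 <= qf (redX X i) v v); rewrite qf_redX // subr_ge0.
have := psd_schur X (delta_mx i 0) v pX; rewrite qf_delta => /(_ hpos).
by rewrite mulrC.
Qed.

Lemma redX_diag X i j : X^T = X ->
  redX X i j j = X j j - (X i i)^-1 * X j i ^+ 2.
Proof.
move=> sX; rewrite -(qf_delta (redX X i) j j) qf_redX // !qf_delta //.
Qed.

Lemma psd_diag (X : 'M[R]_n) j : psd X -> 0 <= X j j.
Proof. by move=> pX; rewrite -(qf_delta X j j); exact: psd_qf. Qed.

Lemma tr_rank1 (S : 'M[R]_n) (u : 'cV[R]_n) : \tr (S *m (u *m u^T)) = qf S u u.
Proof. by rewrite mulmxA mxtrace_mulC tr11 /qf mulmxA. Qed.

Lemma psd_trace_aux (N : nat) (S : 'M[R]_n) : psd S -> forall X : 'M[R]_n, psd X ->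
  (#|[set j | X j j != 0%R]| < N)%N -> 0 <= \tr (S^T *m X).
Proof.
move=> pS; have sS : S^T = S by case: pS.
rewrite sS.
elim: N => [//|N IH] X pX.
have sX : X^T = X by case: pX.
case: (set_0Vmem [set j | X j j != 0]) => [h0 _| [i]].
  have -> : X = 0.
    apply/matrixP => a b; rewrite mxE -qf_delta.
    apply: psd_null => //; rewrite qf_delta.
    apply/eqP; apply: contraT => hb.
    have : b \in [set j | X j j != 0] by rewrite inE.
    by rewrite h0 in_set0.
  by rewrite mulmx0 mxtrace0.
rewrite inE => hi hcard.
have hpos : 0 < X i i by rewrite lt_def hi psd_diag.
have hX : X = redX X i + (X i i)^-1 *: ((X *m delta_mx i (0 : 'I_1)) *m (X *m delta_mx i (0 : 'I_1))^T).
  by rewrite /redX subrK.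
rewrite hX mulmxDr mxtraceD -scalemxAr mxtraceZ tr_rank1.
apply: addr_ge0; last by apply: mulr_ge0; [rewrite invr_ge0 ltW | exact: psd_qf].
apply: IH; first exact: redX_psd.
rewrite -ltnS; apply: leq_trans hcard; rewrite ltnS.
apply: proper_card; apply/properP; split.
  apply/subsetP => j; rewrite !inE; apply: contraNN => /eqP hj.
  apply/eqP; apply: le_anti; apply/andP; split; last first.
    by apply: psd_diag; exact: redX_psd.
  rewrite redX_diag // hj sub0r oppr_le0; apply: mulr_ge0; first by rewrite invr_ge0 ltW.
  by rewrite sqr_ge0.
exists i; first by rewrite inE.
rewrite inE negbK redX_diag // expr2 mulKf //; rewrite subrr //.
Qed.

Lemma psd_trace (S X : 'M[R]_n) : psd S -> psd X -> 0 <= \tr (S^T *m X).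
Proof. by move=> pS pX; apply: (psd_trace_aux #|[set j | X j j != 0%R]|.+1). Qed.

End PSD.
Section Main.
Variables (R : rcfType) (l : nat) (n : 'I_l -> nat) (d m k : nat)
  (p : 'I_l -> nat).
Variables (A : 'I_m -> forall j : 'I_l, 'M[R]_(n j)) (a0 : 'I_m -> 'rV[R]_d)
  (C : forall j : 'I_l, 'M[R]_(n j)) (c : 'rV[R]_d) (b : 'I_m -> R).
Hypothesis symA : forall i j, (A i j)^T = A i j.
Hypothesis symC : forall j, (C j)^T = C j.

Lemma frob_Slam lam j (X : 'M[R]_(n j)) :
  frob (Slam A C lam j) X = frob (C j) X - \sum_i lam i * frob (A i j) X.
Proof.
rewrite /frob /Slam linearB /= mulmxBl linearB /=; congr (_ - _).
rewrite linear_sum /= mulmx_suml linear_sum /=; apply: eq_bigr => i _.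
by rewrite linearZ /= -scalemxAl linearZ.
Qed.

Lemma dotv_slam lam x :
  dotv (slam a0 c lam) x = dotv c x - \sum_i lam i * dotv (a0 i) x.
Proof.
rewrite /dotv /slam.
under [X in _ = _ - X]eq_bigr do rewrite mulr_sumr.
rewrite exchange_big /= -sumrB; apply: eq_bigr => t _.
rewrite !mxE summxE mulrBl; congr (_ - _).
rewrite mulr_suml; apply: eq_bigr => i _; rewrite mxE mulrA //.
Qed.


Lemma obj_eq lam (X : forall j : 'I_l, 'M[R]_(n j)) x :
  feas A a0 b X x -> slam a0 c lam = 0 ->
  obj C c X x = \sum_j frob (Slam A C lam j) (X j) + \sum_i lam i * b i.
Proof.
move=> [_ hb] hs.
have h1 : \sum_i lam i * b i =
   \sum_j \sum_i lam i * frob (A i j) (X j) + \sum_i lam i * dotv (a0 i) x.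
  rewrite exchange_big /= -big_split /=; apply: eq_bigr => i _.
  by rewrite -hb /opA mulrDr mulr_sumr.
have h2 : \sum_j frob (Slam A C lam j) (X j) =
   \sum_j frob (C j) (X j) - \sum_j \sum_i lam i * frob (A i j) (X j).
  by rewrite -sumrB; apply: eq_bigr => j _; rewrite frob_Slam.
have h3 := dotv_slam lam x; rewrite hs in h3.
have h4 : dotv 0 x = 0 by rewrite /dotv big1 // => t _; rewrite mxE mul0r.
rewrite h4 in h3.
rewrite /obj h1 h2; lra.
Qed.

Lemma Slam_sym lam j : (Slam A C lam j)^T = Slam A C lam j.
Proof.
rewrite /Slam linearB /= symC linear_sum /=; congr (_ - _).
by apply: eq_bigr => i _; rewrite linearZ /= symA.
Qed.


End Main.

Lemma frob_YY (R : rcfType) (r q : nat) (S : 'M[R]_r) (Y : 'M[R]_(r, q)) :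
  S^T = S -> S *m Y = 0 -> frob S (Y *m Y^T) = 0.
Proof. by move=> sS hSY; rewrite /frob sS mulmxA hSY mul0mx mxtrace0. Qed.

Lemma frob_psd (R : rcfType) (r : nat) (S X : 'M[R]_r) :
  psd S -> psd X -> 0 <= frob S X.
Proof. exact: psd_trace. Qed.

Lemma YY_psd (R : rcfType) (r q : nat) (Y : 'M[R]_(r, q)) : psd (Y *m Y^T).
Proof.
split; first by rewrite trmx_mul trmxK.
move=> v; rewrite !mulmxA -(mulmxA (v^T *m Y)).
have -> : Y^T *m v = (v^T *m Y)^T by rewrite trmx_mul trmxK.
rewrite mxE; apply: sumr_ge0 => t _; rewrite [X in _ * X]mxE -expr2; exact: sqr_ge0.
Qed.


Lemma rank_def_psd (R : rcfType) (r q : nat) (S : 'M[R]_r) (Y : 'M[R]_(r, q)) :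
  S^T = S -> (\rank Y < q)%N ->
  (forall U : 'M[R]_(r, q), U *m Y^T = 0 -> 0 <= frob S (U *m U^T)) -> psd S.
Proof.
move=> sS hrk hU; split => // v.
set K := kermx Y^T.
have hK : K != 0.
  rewrite -mxrank_eq0 /K mxrank_ker mxrank_tr; rewrite -lt0n subn_gt0 //.
have [t ht] : exists t, row t K != 0.
  apply/existsP; apply: contraT; rewrite negb_exists => /forallP hall.
  suff : K == 0 by rewrite (negbTE hK).
  apply/eqP/row_matrixP => t.
  by have := hall t; rewrite negbK row0 => /eqP ->.
set z := row t K.
have hz : z *m Y^T = 0 by rewrite /z -row_mul mulmx_ker linear0.
have := hU (v *m z); rewrite -mulmxA hz mulmx0 => /(_ erefl).
have -> : v *m z *m (v *m z)^T = (z *m z^T) 0 0 *: (v *m v^T).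
  rewrite trmx_mul -mulmxA (mulmxA z) [X in v *m (X *m _)]mx11_scalar mul_scalar_mx.
  by rewrite scalemxAr.
have hpos : 0 < (z *m z^T) 0 0.
  rewrite lt_def; apply/andP; split; last first.
    rewrite mxE; apply: sumr_ge0 => s _; rewrite [X in _ * X]mxE -expr2; exact: sqr_ge0.
  apply: contra ht => /eqP h0; apply/eqP/rowP => s; rewrite [RHS]mxE.
  have h0' : \sum_s0 z 0 s0 * z^T s0 0 = 0 by move: h0; rewrite mxE.
  have hnn : forall s0 : 'I_q, true -> 0 <= z 0 s0 * z^T s0 0.
    by move=> s' _; rewrite [X in _ * X]mxE -expr2; exact: sqr_ge0.
  have hs := psumr_eq0P hnn h0' (i := s) isT.
  move: hs; rewrite [X in _ * X]mxE -expr2 => /eqP; rewrite sqrf_eq0 => /eqP //.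
rewrite /frob -scalemxAr mxtraceZ pmulr_rge0 //.
by rewrite mulmxA mxtrace_mulC tr11 sS !mulmxA.
Qed.

Theorem lemma13 (R : rcfType) (l : nat) (n : 'I_l -> nat) (d m k : nat)
  (p : 'I_l -> nat)
  (A : 'I_m -> forall j : 'I_l, 'M[R]_(n j)) (a0 : 'I_m -> 'rV[R]_d)
  (C : forall j : 'I_l, 'M[R]_(n j)) (c : 'rV[R]_d) (b : 'I_m -> R) :
  (1 <= k <= l)%N ->
  (forall j : 'I_l, (j < k)%N -> (0 < p j)%N) ->
  (forall i j, (A i j)^T = A i j) ->
  (forall j, (C j)^T = C j) ->
  (* 𝒳 nonempty and min_{X ∈ 𝒳} <C,X> attained *)
  (exists (X : forall j : 'I_l, 'M[R]_(n j)) (x : 'rV[R]_d),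
      feas A a0 b X x /\
      forall (X' : forall j : 'I_l, 'M[R]_(n j)) (x' : 'rV[R]_d),
        feas A a0 b X' x' -> obj C c X x <= obj C c X' x') ->
  forall (Y : forall j : 'I_l, 'M[R]_(n j, p j))
         (Xb : forall j : 'I_l, 'M[R]_(n j)) (x : 'rV[R]_d),
    (exists lam : 'I_m -> R,
        crit1 k A a0 C c b Y Xb x lam /\
        forall j : 'I_l, (j < k)%N -> psd (Slam A C lam j))
    \/
    ((exists lam : 'I_m -> R, crit2 k A a0 C c b Y Xb x lam) /\
     forall j : 'I_l, (j < k)%N -> (\rank (Y j) < p j)%N) ->
    bm_global_min k A a0 C c b Y Xb x.
Proof.
move=> _ _ symA symC _ Y Xb x hyp.
have [lam [hc1 hpsd]] : exists lam, crit1 k A a0 C c b Y Xb x lam /\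
    forall j, psd (Slam A C lam j).
  case: hyp => [[lam [h1 h2]] | [[lam [h1 h2]] hrk]]; exists lam; split => //.
    move=> j; case: (ltnP j k) => hj; first exact: h2.
    by case: h1 => _ hge _ _ _; exact: hge.
  move=> j; case: (ltnP j k) => hj; last by case: h1 => _ hge _ _ _; exact: hge.
  apply: (rank_def_psd _ _ _ _ (Y j)); [exact: Slam_sym | exact: hrk | ].
  move=> U hU; apply: h2 => // i; rewrite /Aj hU /frob mulmx0 mxtrace0 //.
case: hc1 => hfeas hge hsum hs hSY.
split => // Y' Xb' x' hf'.
rewrite (obj_eq _ _ _ _ _ _ _ _ _ _ lam _ _ hfeas hs).
rewrite (obj_eq _ _ _ _ _ _ _ _ _ _ lam _ _ hf' hs) lerD2r.
have -> : \sum_j frob (Slam A C lam j) (qfull k Y Xb j) = 0.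
  rewrite (bigID (fun j : 'I_l => (j < k)%N)) /= big1 ?add0r.
    rewrite -[RHS]hsum; apply: eq_big => j; first by rewrite -leqNgt.
    by move=> hj; rewrite /qfull (negbTE hj).
  move=> j hj; rewrite /qfull hj; apply: frob_YY; [exact: Slam_sym | exact: hSY].
apply: sumr_ge0 => j _; apply: frob_psd; first exact: hpsd.
by case: hf' => hp _; exact: hp.
Qed.
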